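(* Let $G$ be a finite simple graph on a vertex set $V$ with $|V|=n\ge2$, and let $k\ge1$. Let $\mathscr A=\{I(K_n\setminus e)\}^{*\infty}\cup\{I(K_n)\}$ (graphs on $V$), and let $\mathscr W_k=\mathscr A+\dots+\mathscr A+\{I(K_n)\}$ with $k-1$ summands $\mathscr A$ (so $\mathscr W_1=\{I(K_n)\}$). Then $G$ has a proper edge colouring with $k$ colours if and only if there exists $H\in\{I(G)\}*\mathscr W_k$ such that for every $a\in\{1,\dots,k\}$ every element of $s(\{I(U_a(H))\}*\{I(K_{1,n-1})\})$ is at most $1$.
   Context: Take $R=\mathbb{Z}$ (or $\mathbb R$). An $R$-weighted complete graph $K$ is a finite vertex set with a weight $v_K(e)\in R$ on every 2-subset $e$. For such $H,G'$ with equal vertex counts and a bijection $f:V(H)\to V(G')$, $H*_fG'$ has vertex set $V(H)$ and weights $v_H(\{x,y\})v_{G'}(\{f(x),f(y)\})$; $H*G'=\{H*_fG': f \text{ bijection}\}$, and for sets $\mathscr H*\mathscr G=\bigcup_{H\in\mathscr H,G'\in\mathscr G}H*G'$. $s(K)=\sum_e v_K(e)$, $s(\mathscr K)=\{s(K):K\in\mathscr K\}$. For weighted complete graphs $H_1,H_2$ on the same vertex set, $H_1+H_2$ has weights $v_{H_1}+v_{H_2}$; for sets on a common vertex set, $\mathscr H_1+\mathscr H_2=\{H_1+H_2\}$. For a set $\mathscr X$, $\mathscr X^{*1}=\mathscr X$, $\mathscr X^{*(m+1)}=\mathscr X^{*m}*\mathscr X$; if there is $N$ with $\mathscr X^{*m}=\mathscr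 X^{*N}$ for all $m\ge N$, then $\mathscr X^{*\infty}:=\mathscr X^{*N}$ (this exists for $\mathscr X=\{I(K_n\setminus e)\}$). $K_n\setminus e$ is the complete graph on $V$ with one edge removed. For a simple graph $G$, $I(G)$ has weight $1$ on edges and $0$ on non-edges. For $a\in R$ and a weighted complete graph $H$, $U_a(H)$ is the unweighted graph on $V(H)$ whose edges are the pairs $e$ with $v_H(e)=a$. *)

(* Defs.v *)
From HB Require Import structures.
From mathcomp Require Import all_boot all_order all_algebra all_fingroup.
Set Implicit Arguments. Unset Strict Implicit. Unset Printing Implicit Defensive.
Import Order.TTheory GRing.Theory Num.Theory.
Local Open Scope ring_scope.

Section WG.
Variable T : finType.

(* A weighted complete graph on vertex set T: a weight on every 2-subset of T.
   Canonical representation: value 0 on subsets that are not 2-subsets. *)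
Definition wgraph := {ffun {set T} -> int}.

Definition two (e : {set T}) : bool := #|e| == 2%N.

Definition wset := wgraph -> Prop.

Definition wseteq (S1 S2 : wset) : Prop := forall K, S1 K <-> S2 K.

Definition wsingle (K : wgraph) : wset := fun H => H = K.

Definition wprod (f : {perm T}) (H G : wgraph) : wgraph :=
  [ffun e => if two e then H e * G (f @: e) else 0].

Definition wsprod (S1 S2 : wset) : wset :=
  fun K => exists H G f, [/\ S1 H, S2 G & K = wprod f H G].

Definition wadd (H1 H2 : wgraph) : wgraph :=
  [ffun e => if two e then H1 e + H2 e else 0].

Definition wsadd (S1 S2 : wset) : wset :=
  fun K => exists H1 H2, [/\ S1 H1, S2 H2 & K = wadd H1 H2].

Definition wsunion (S1 S2 : wset) : wset := fun K => S1 K \/ S2 K.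

Definition wsum (K : wgraph) : int := \sum_(e : {set T} | two e) K e.

(* X^{* (m.+1)} *)
Fixpoint wpow_aux (X : wset) (m : nat) : wset :=
  match m with
  | 0 => X
  | m'.+1 => wsprod (wpow_aux X m') X
  end.

Definition wpow (X : wset) (m : nat) : wset := wpow_aux X m.-1.

Definition wstable (X : wset) (N : nat) : Prop :=
  (1 <= N)%N /\ forall m, (N <= m)%N -> wseteq (wpow X m) (wpow X N).

(* X^{*oo} := X^{*N} for any N at which the powers stabilise
   (all such N give the same set; empty if no such N exists). *)
Definition wpowinf (X : wset) : wset :=
  fun K => exists N, wstable X N /\ wpow X N K.

Definition simple_graph (E : {set {set T}}) : Prop := forall e, e \in E -> two e.

Definition Ig (E : {set {set T}}) : wgraph :=
  [ffun e => if two e && (e \in E) then 1 else 0].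

Definition Kn : {set {set T}} := [set e | two e].

Definition Kn_minus (e0 : {set T}) : {set {set T}} := [set e | two e & e != e0].

Definition star (c : T) : {set {set T}} := [set e | two e & c \in e].

Definition U (a : int) (H : wgraph) : {set {set T}} := [set e | two e & H e == a].

Definition Aset (e0 : {set T}) : wset :=
  wsunion (wpowinf (wsingle (Ig (Kn_minus e0)))) (wsingle (Ig Kn)).

(* W_{m.+1} = A + ... + A + {I(K_n)} with m summands A *)
Fixpoint W_aux (e0 : {set T}) (m : nat) : wset :=
  match m with
  | 0 => wsingle (Ig Kn)
  | m'.+1 => wsadd (Aset e0) (W_aux e0 m')
  end.

Definition W (e0 : {set T}) (k : nat) : wset := W_aux e0 k.-1.

Definition proper_edge_colouring (E : {set {set T}}) (k : nat) : Prop :=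
  exists c : {set T} -> 'I_k,
    forall e1 e2, e1 \in E -> e2 \in E -> e1 != e2 ->
      ~~ [disjoint e1 & e2] -> c e1 != c e2.

End WG.

(* Main.v *)
Require Import Defs.
From mathcomp Require Import all_boot all_order all_algebra all_fingroup.
From mathcomp Require Import zify.
Set Implicit Arguments. Unset Strict Implicit. Unset Printing Implicit Defensive.
Import Order.TTheory GRing.Theory Num.Theory.
Local Open Scope ring_scope.

Section H.
Variable T : finType.
Implicit Types (e : {set T}) (S : {set {set T}}).

Lemma two_perm (f : {perm T}) e : two (f @: e) = two e.
Proof. by rewrite /two card_imset //; apply: perm_inj. Qed.

Lemma perm_two e e0 : two e -> two e0 -> exists f : {perm T}, f @: e = e0.
Proof.
move=> /cards2P [x [y [xy ->]]] /cards2P [u [v [uv ->]]].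
pose g := tperm x u; pose h := tperm (g y) v.
have gyu : g y != u.
  apply/eqP => E; move: xy; rewrite -(inj_eq (@perm_inj _ g)) E /g tpermL eqxx.
  by [].
exists (g * h)%g.
rewrite imsetU1 imset_set1 !permM /g tpermL -/g /h tpermL tpermD //.
by rewrite eq_sym.
Qed.

Lemma imset_perm1 e : (1%g : {perm T}) @: e = e.
Proof.
apply/setP => x; apply/imsetP/idP => [[y ye ->]|xe]; first by rewrite perm1.
by exists x; rewrite ?perm1.
Qed.

Lemma wprodE f (H G : wgraph T) e : two e -> wprod f H G e = H e * G (f @: e).
Proof. by move=> te; rewrite /wprod ffunE te. Qed.

Lemma IgE E e : Ig E e = if two e && (e \in E) then 1 else 0.
Proof. by rewrite ffunE. Qed.

Definition D S : {set {set T}} := [set e | two e & e \notin S].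

Lemma prodD (f : {perm T}) S e0 :
  wprod f (Ig (D S)) (Ig (Kn_minus e0)) = Ig (D (((f^-1)%g @: e0) |: S)).
Proof.
apply/ffunP => e; rewrite [LHS]ffunE !IgE !inE.
case te: (two e) => /=; last by [].
rewrite two_perm te /=.
have -> : (f @: e == e0) = (e == (f^-1)%g @: e0).
  apply/eqP/eqP => [<-|->].
    apply/setP=> x; apply/idP/imsetP => [xe|[y /imsetP [z ze ->] ->]].
      by exists (f x); [apply: imset_f|rewrite permK].
    by rewrite permK.
  apply/setP=> x; apply/imsetP/idP => [[y /imsetP [z ze ->] ->]|xe].
    by rewrite permKV.
  by exists ((f^-1)%g x); [apply: imset_f|rewrite permKV].
by case: (e \in S); case: (e == _).
Qed.

Definition Pm e0 (m : nat) (K : wgraph T) :=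
  exists S, [/\ {subset S <= Kn T}, e0 \in S, (#|S| <= m.+1)%N & K = Ig (D S)].

Lemma Kn_minusD e0 : Kn_minus e0 = D [set e0].
Proof. by apply/setP => e; rewrite !inE. Qed.

Lemma wpow_char e0 m K : two e0 ->
  wpow_aux (wsingle (Ig (Kn_minus e0))) m K <-> Pm e0 m K.
Proof.
move=> t0; elim: m K => [|m IH] K /=.
  split => [->|[S [sub inS cS ->]]].
    exists [set e0]; split => //; last by rewrite Kn_minusD.
      by move=> e; rewrite !inE => /eqP ->.
    by rewrite set11. by rewrite cards1.
  have -> : S = [set e0]; last by rewrite Kn_minusD.
  apply/eqP; rewrite eq_sym eqEcard sub1set inS cards1 cS.
  by [].
split.
  move=> [H [G [f [/IH [S [sub inS cS ->]] -> ->]]]].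
  rewrite prodD; exists (((f^-1)%g @: e0) |: S); split.
  - move=> e; rewrite in_setU1 => /orP [/eqP ->|/sub //].
    by rewrite inE two_perm.
  - by rewrite in_setU1 inS orbT.
  - by rewrite cardsU1; case: (_ \in S) cS => /=; lia.
  - by [].
move=> [S [sub inS cS ->]].
case: (boolP (S == [set e0])) => [/eqP SE|Sne].
  exists (Ig (D S)), (Ig (Kn_minus e0)), 1%g; split => //.
    apply/IH; exists S; split => //; by rewrite SE cards1.
  rewrite prodD; congr (Ig (D _)); apply/setP => e.
  rewrite in_setU1 invg1 imset_perm1 SE !inE; by case: (e == e0).
have : [exists e' in S, e' != e0].
  move: Sne; apply: contraR; rewrite negb_exists => /forallP Hf.
  rewrite eqEsubset sub1set inS andbT; apply/subsetP => e eS.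
  by move: (Hf e); rewrite eS /= negbK inE.
case/existsP => e' /andP [e'S e'ne].
have te' : two e' by move: (sub _ e'S); rewrite inE.
have [f fe] := perm_two te' t0.
exists (Ig (D (S :\ e'))), (Ig (Kn_minus e0)), f; split => //.
  apply/IH; exists (S :\ e'); split.
  - by move=> e; rewrite inE => /andP [_ /sub].
  - by rewrite !inE inS andbT eq_sym.
  - by move: cS; rewrite (cardsD1 e' S) e'S add1n ltnS.
  - by [].
rewrite prodD; congr (Ig (D _)).
have -> : (f^-1)%g @: e0 = e'.
  rewrite -fe; apply/setP => x; apply/imsetP/idP => [[y /imsetP [z ze ->] ->]|xe].
    by rewrite permK.
  by exists (f x); [apply: imset_f|rewrite permK].
by rewrite setD1K.
Qed.


Lemma Pm_free e0 m K : (#|Kn T| <= m.+1)%N ->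
  Pm e0 m K <-> exists S, [/\ {subset S <= Kn T}, e0 \in S & K = Ig (D S)].
Proof.
move=> hm; split => [[S [a b _ d]]|[S [a b d]]]; first by exists S.
exists S; split => //; apply: leq_trans hm.
by apply: subset_leq_card; apply/subsetP.
Qed.

Lemma wstable_N e0 : two e0 -> wstable (wsingle (Ig (Kn_minus e0))) #|Kn T|.
Proof.
move=> t0; have hN : (1 <= #|Kn T|)%N.
  by apply/card_gt0P; exists e0; rewrite inE.
split => // m hm K; rewrite /wpow !wpow_char //.
rewrite Pm_free; last by rewrite prednK //; apply: leq_trans hm.
rewrite Pm_free //; last by rewrite prednK.
Qed.

Lemma wpowinf_mem e0 S : two e0 -> {subset S <= Kn T} -> e0 \in S ->
  wpowinf (wsingle (Ig (Kn_minus e0))) (Ig (D S)).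
Proof.
move=> t0 sub inS; exists #|Kn T|; split; first exact: wstable_N.
have hN : (1 <= #|Kn T|)%N by apply/card_gt0P; exists e0; rewrite inE.
rewrite /wpow wpow_char // Pm_free; last by rewrite prednK.
by exists S.
Qed.

Lemma Aset_Ig e0 K : two e0 -> Aset e0 K -> exists E', K = Ig E'.
Proof.
move=> t0 [[N [_ ]]|->]; last by exists (Kn T).
rewrite /wpow wpow_char // => -[S [_ _ _ ->]]; by exists (D S).
Qed.

Lemma W_bound e0 m K : two e0 -> W_aux e0 m K ->
  forall e, two e -> 1 <= K e <= (m.+1)%:Z.
Proof.
move=> t0; elim: m K => [|m IH] K /=.
  by move=> -> e te; rewrite IgE inE te.
move=> [H1 [H2 [/(Aset_Ig t0) [E' ->] /IH h2 ->]]] e te.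
rewrite ffunE te IgE; have /andP [p q] := h2 e te.
by case: ifP => _; lia.
Qed.

End H.

Lemma disj_ex (T : finType) (A B : {set T}) :
  ~~ [disjoint A & B] -> exists v, (v \in A) && (v \in B).
Proof. move=> /pred0Pn [v]; by exists v. Qed.

Lemma wsum_ge0 (T : finType) (x : wgraph T) : (forall e, two e -> 0 <= x e) ->
  forall e1 e2, e1 != e2 -> two e1 -> two e2 -> x e1 = 1 -> x e2 = 1 -> 2 <= wsum x.
Proof.
move=> h e1 e2 ne t1 t2 x1 x2; rewrite /wsum (bigD1 e1) //= (bigD1 e2) /=;
  last by rewrite t2 eq_sym.
rewrite x1 x2 addrA -[2]addr0 lerD //.
by apply: sumr_ge0 => i /andP [/andP [ti _] _]; apply: h.
Qed.

Theorem mainTheorem9 (T : finType) (E : {set {set T}}) (k : nat)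
  (e0 : {set T}) (c : T) :
  simple_graph E -> (2 <= #|T|)%N -> (1 <= k)%N -> two e0 ->
  (proper_edge_colouring E k <->
   exists H, wsprod (wsingle (Ig E)) (W e0 k) H /\
     forall a : nat, (1 <= a <= k)%N ->
       forall x, wsprod (wsingle (Ig (U a%:Z H))) (wsingle (Ig (star c))) x ->
         wsum x <= 1).
Proof.
move=> sE _; case: k => [//|k] _ t0; split.
- move=> [col prop].
  pose c' (e : {set T}) : 'I_k.+1 :=
    if e == e0 then ord0 else tperm (col e0) ord0 (col e).
  have prop' : forall e1 e2, e1 \in E -> e2 \in E -> e1 != e2 ->
      ~~ [disjoint e1 & e2] -> c' e1 != c' e2.
    move=> e1 e2 i1 i2 ne nd; rewrite /c'.
    have H12 := prop _ _ i1 i2 ne nd.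
    case: (eqVneq e1 e0) => [E1|N1]; case: (eqVneq e2 e0) => [E2|N2].
    + by rewrite E1 E2 eqxx in ne.
    + by rewrite -E1 -[X in X != _](tpermL (col e1) ord0) (inj_eq (@perm_inj _ _)).
    + by rewrite -E2 -[X in _ != X](tpermL (col e2) ord0) (inj_eq (@perm_inj _ _)).
    + by rewrite (inj_eq (@perm_inj _ _)).
  pose Wm (m : nat) : wgraph T :=
    [ffun e => if two e then (1 + minn (c' e) m)%N%:Z else 0].
  have WmW : forall m, W_aux e0 m (Wm m).
    elim => [|m IH] /=.
      apply/ffunP => e; rewrite !ffunE inE; case: (two e) => //.
    exists (Ig (D [set e | two e & (c' e <= m)%N])), (Wm m); split => //.
      left; apply: wpowinf_mem => //.
        by move=> e; rewrite !inE => /andP [].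
      by rewrite inE t0 /c' eqxx.
    apply/ffunP => e; rewrite !ffunE !inE; case te: (two e) => //=.
    case: leqP => h /=; lia.
  pose H := wprod 1%g (Ig E) (Wm k).
  have HE : forall e, two e -> H e = if e \in E then (1 + c' e)%N%:Z else 0.
    move=> e te; rewrite /H wprodE // imset_perm1 IgE te !ffunE te /=.
    have -> : minn (c' e) k = c' e by apply/minn_idPl; rewrite -ltnS.
    by case: (e \in E); rewrite ?mul1r ?mul0r.
  exists H; split.
    by exists (Ig E), (Wm k), 1%g; split.
  move=> a ha x [H1 [G [g [-> -> ->]]]].
  pose P e := [&& two e, H e == a%:Z & c \in g @: e].
  have xE : forall e, two e -> wprod g (Ig (U a H)) (Ig (star c)) e = if P e then 1 else 0.
    move=> e te; rewrite wprodE // !IgE !inE two_perm te /P /=.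
    by rewrite te /=; case: (H e == a); case: (c \in _); rewrite ?mul1r ?mul0r.
  have uniqP : forall e1 e2, P e1 -> P e2 -> e1 = e2.
    move=> e1 e2 /and3P [t1 h1 c1] /and3P [t2 h2 c2].
    apply/eqP; apply: contraT => ne.
    rewrite HE // in h1; rewrite HE // in h2.
    case i1: (e1 \in E) h1 => h1; last by case/andP: ha => ha _; move/eqP: h1; lia.
    case i2: (e2 \in E) h2 => h2; last by case/andP: ha => ha _; move/eqP: h2; lia.
    move/eqP: h1 => h1; move/eqP: h2 => h2.
    have nd : ~~ [disjoint e1 & e2].
      apply/negP => /disjointFr dj.
      have m1 : ((g^-1)%g c) \in e1.
        by rewrite -(mem_imset _ _ (@perm_inj _ g)) permKV.
      have m2 : ((g^-1)%g c) \in e2.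
        by rewrite -(mem_imset _ _ (@perm_inj _ g)) permKV.
      by rewrite (dj _ m1) in m2.
    have := prop' _ _ i1 i2 ne nd.
    move=> /eqP h; exfalso; apply: h; apply/val_inj => /=; lia.
  rewrite /wsum; case: (pickP (fun e => P e)) => [e1 p1|nP].
    have t1 : two e1 by case/and3P: p1.
    rewrite (bigD1 e1) //= xE // p1 big1 ?addr0 // => e /andP [te ne].
    rewrite xE //; case pe: (P e) => //.
    by rewrite (uniqP _ _ pe p1) eqxx in ne.
  by rewrite big1 // => e te; rewrite xE // nP.
- move=> [H [[H1 [Wk [f [-> /= WW ->]]]] hyp]].
  have Wb := W_bound t0 WW.
  pose col (e : {set T}) : 'I_k.+1 := inord (absz (Wk (f @: e)) - 1).
  exists col => e1 e2 i1 i2 ne nd.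
  apply/negP => /eqP ceq.
  have t1 := sE _ i1; have t2 := sE _ i2.
  have /andP [p1 q1] := Wb _ (etrans (two_perm f e1) t1).
  have /andP [p2 q2] := Wb _ (etrans (two_perm f e2) t2).
  have eqw : Wk (f @: e1) = Wk (f @: e2).
    move: ceq => /(congr1 val) /=; rewrite !inordK; first lia.
      by lia. by lia.
  have [v /andP [v1 v2]] := disj_ex nd.
  set a := absz (Wk (f @: e1)).
  have aZ : a%:Z = Wk (f @: e1) by rewrite /a; lia.
  have ha : (1 <= a <= k.+1)%N by rewrite /a; lia.
  pose g := tperm v c.
  have := hyp a ha (wprod g (Ig (U a (wprod f (Ig E) Wk))) (Ig (star c))).
  have -> : (wsum (wprod g (Ig (U a (wprod f (Ig E) Wk))) (Ig (star c))) <= 1) = false.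
    apply/negbTE; rewrite -ltNge.
    have xE : forall e, e \in E -> v \in e -> Wk (f @: e) = a%:Z ->
        wprod g (Ig (U a (wprod f (Ig E) Wk))) (Ig (star c)) e = 1.
      move=> e ie ve we; have te := sE _ ie.
      rewrite wprodE // !IgE !inE two_perm te wprodE // IgE te ie we mul1r eqxx /=.
      have -> : c \in g @: e by rewrite -(tpermL v c) -/g; apply: imset_f.
      by rewrite mul1r.
    apply: (@lt_le_trans _ _ 2) => //.
    apply: (wsum_ge0 _ ne) => //.
    - move=> e te; rewrite wprodE // !IgE.
      by case: (_ && _); case: (_ && _).
    - by rewrite xE.
    - by rewrite xE // -eqw.
  move=> h; suff: false by []; apply: h.
  exists (Ig (U a (wprod f (Ig E) Wk))), (Ig (star c)), g; split; exact: erefl.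
Qed.
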